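(* (Working in $\mathbf{ZF}$.) A generalized topological space $X$ is topologically compact if and only if it is topologically $\mathbf{GTS}$-complete, i.e. for every generalized topological space $Y$ and every set $C$ weakly closed in the $\mathbf{GTS}$-product $X\times_{\mathbf{GTS}}Y$, the projection $\pi_Y(C)$ is weakly closed in $Y$.
   Context: A generalized topological space (gts) $(X,\mathrm{Op}_X,\mathrm{Cov}_X)$ is in the sense of Delfs–Knebusch: $\mathrm{Op}_X\subseteq\mathcal P(X)$ (open sets), $\mathrm{Cov}_X\subseteq\mathcal P(\mathrm{Op}_X)$ (admissible coverings) satisfying (A1) $\emptyset,X\in\mathrm{Op}_X$; (A2) finite unions and intersections of open sets are open; (A3) finite families of open sets are admissible; (A4) unions of admissible families are open; (A5) for admissible $\mathcal U$ and open $V\subseteq\bigcup\mathcal U$, $\{V\cap U:U\in\mathcal U\}$ is admissible; (A6) if $\mathcal U$ is admissible and each $U\in\mathcal U$ has an admissible covering $\mathcal V_U$ with union $U$, then $\bigcup_U\mathcal V_U$ is admissible; (A7) a family $\mathcal V$ of open sets with the same union as an admissible $\mathcal U$, such that every member of $\mathcal U$ lies in a member of $\mathcal V$, is admissible; (A8) if $\mathcal U$ is admissible, $V\subseteq\bigcup\mathcal U$ and all $V\cap U$ ($U\in\mathcal U$) are open, then $V$ is open. A generalized topology in a set $Z$ is a collection $\mathrm{Cov}$ with $(Z,\bigcup\mathrm{Cov},\mathrm{Cov})$ a gts; for $\mathcal A$ a collection of families of subsets of $Z$, $\langle\mathcal A\rangle_Z$ is the smallest generalized topology in $Z$ containing $\mathcal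 A$. Weakly open (closed) sets of a gts are the open (closed) sets of the topology generated by its open sets; the gts is topologically compact if this topology is compact. The $\mathbf{GTS}$-product $X\times_{\mathbf{GTS}}Y$ is the set $X\times Y$ with the generalized topology $\langle\{\pi_X^{-1}(\mathcal U):\mathcal U\in\mathrm{Cov}_X\}\cup\{\pi_Y^{-1}(\mathcal V):\mathcal V\in\mathrm{Cov}_Y\}\rangle_{X\times Y}$, where $\pi_X,\pi_Y$ are the projections and $\pi^{-1}(\mathcal U)=\{\pi^{-1}(U):U\in\mathcal U\}$. *)

(* Defs.v *)
From Stdlib Require Import List.

Section Sets.
Variable T : Type.

Definition set_union (U V : T -> Prop) : T -> Prop := fun x => U x \/ V x.
Definition set_inter (U V : T -> Prop) : T -> Prop := fun x => U x /\ V x.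
Definition set_compl (U : T -> Prop) : T -> Prop := fun x => ~ U x.
Definition subset (U V : T -> Prop) : Prop := forall x, U x -> V x.
Definition bigU (F : (T -> Prop) -> Prop) : T -> Prop :=
  fun x => exists U, F U /\ U x.
Definition finite_family (F : (T -> Prop) -> Prop) : Prop :=
  exists l : list (T -> Prop), forall U, F U <-> In U l.

(* Delfs–Knebusch axioms (A1)–(A8) for (T, Op, Cov), together with
   Cov ⊆ P(Op). *)
Definition is_gts (Op : (T -> Prop) -> Prop)
    (Cov : ((T -> Prop) -> Prop) -> Prop) : Prop :=
  (forall F, Cov F -> forall U, F U -> Op U) /\
  Op (fun _ => False) /\ Op (fun _ => True) /\
  (forall U V, Op U -> Op V -> Op (set_union U V) /\ Op (set_inter U V)) /\
  (forall F, (forall U, F U -> Op U) -> finite_family F -> Cov F) /\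
  (forall F, Cov F -> Op (bigU F)) /\
  (forall F V, Cov F -> Op V -> subset V (bigU F) ->
     Cov (fun W => exists U, F U /\ W = set_inter V U)) /\
  (forall (F : (T -> Prop) -> Prop) (G : (T -> Prop) -> (T -> Prop) -> Prop),
     Cov F -> (forall U, F U -> Cov (G U) /\ bigU (G U) = U) ->
     Cov (fun W => exists U, F U /\ G U W)) /\
  (forall F G, Cov F -> (forall V, G V -> Op V) -> bigU G = bigU F ->
     (forall U, F U -> exists V, G V /\ subset U V) -> Cov G) /\
  (forall F V, Cov F -> subset V (bigU F) ->
     (forall U, F U -> Op (set_inter V U)) -> Op V).

Definition opens_of (Cov : ((T -> Prop) -> Prop) -> Prop) :
    (T -> Prop) -> Prop :=
  fun U => exists F, Cov F /\ F U.

Definition is_gen_topology (Cov : ((T -> Prop) -> Prop) -> Prop) : Prop :=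
  is_gts (opens_of Cov) Cov.

Definition gen_topology_generated (A : ((T -> Prop) -> Prop) -> Prop) :
    ((T -> Prop) -> Prop) -> Prop :=
  fun F => forall Cov, is_gen_topology Cov ->
    (forall G, A G -> Cov G) -> Cov F.

Definition is_topology (Tau : (T -> Prop) -> Prop) : Prop :=
  Tau (fun _ => False) /\ Tau (fun _ => True) /\
  (forall U V, Tau U -> Tau V -> Tau (set_inter U V)) /\
  (forall F, (forall U, F U -> Tau U) -> Tau (bigU F)).

Definition generated_topology (B : (T -> Prop) -> Prop) :
    (T -> Prop) -> Prop :=
  fun W => forall Tau, is_topology Tau -> (forall U, B U -> Tau U) -> Tau W.

Definition compact_topology_gen (B : (T -> Prop) -> Prop) : Prop :=
  forall F, (forall U, F U -> generated_topology B U) ->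
    (forall x, bigU F x) ->
    exists l : list (T -> Prop), (forall U, In U l -> F U) /\
      (forall x, exists U, In U l /\ U x).

End Sets.

Arguments bigU {T}.
Arguments subset {T}.
Arguments set_compl {T}.

Record gts (X : Type) := Gts {
  Op : (X -> Prop) -> Prop;
  Cov : ((X -> Prop) -> Prop) -> Prop;
  gts_axioms : is_gts X Op Cov }.
Arguments Op {X}.
Arguments Cov {X}.

Definition weakly_open {X : Type} (G : gts X) (W : X -> Prop) : Prop :=
  generated_topology X (Op G) W.
Definition weakly_closed {X : Type} (G : gts X) (C : X -> Prop) : Prop :=
  weakly_open G (set_compl C).
Definition top_compact {X : Type} (G : gts X) : Prop :=
  compact_topology_gen X (Op G).

Definition preim_family {A B : Type} (f : A -> B)
    (F : (B -> Prop) -> Prop) : (A -> Prop) -> Prop :=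
  fun W => exists U, F U /\ W = (fun a => U (f a)).

Definition prod_Cov {X Y : Type} (G : gts X) (H : gts Y) :
    (((X * Y) -> Prop) -> Prop) -> Prop :=
  gen_topology_generated (X * Y)
    (fun F => (exists U, Cov G U /\ F = preim_family fst U) \/
              (exists V, Cov H V /\ F = preim_family snd V)).

Definition prod_Op {X Y : Type} (G : gts X) (H : gts Y) :
    ((X * Y) -> Prop) -> Prop :=
  opens_of (X * Y) (prod_Cov G H).

Definition prod_weakly_closed {X Y : Type} (G : gts X) (H : gts Y)
    (C : (X * Y) -> Prop) : Prop :=
  generated_topology (X * Y) (prod_Op G H) (set_compl C).

(* Main.v *)
Require Import Defs.
From Stdlib Require Import List Classical FunctionalExtensionality PropExtensionality.

Lemma pred_ext {T : Type} (A B : T -> Prop) : (forall x, A x <-> B x) -> A = B.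
Proof.
  intro h; apply functional_extensionality; intro x;
  apply propositional_extensionality; apply h.
Qed.

Lemma gt_base {T : Type} (B : (T -> Prop) -> Prop) U :
  B U -> generated_topology T B U.
Proof. intros hU Tau _ hB; apply hB; exact hU. Qed.

Lemma gt_min {T : Type} (B Tau : (T -> Prop) -> Prop) :
  is_topology T Tau -> (forall U, B U -> Tau U) ->
  forall U, generated_topology T B U -> Tau U.
Proof. intros hT hB U hU; apply hU; assumption. Qed.

Lemma gt_top {T : Type} (B : (T -> Prop) -> Prop) :
  is_topology T (generated_topology T B).
Proof.
  repeat split.
  - intros Tau hT _; apply hT.
  - intros Tau hT _; apply hT.
  - intros U V hU hV Tau hT hB. apply hT; [apply hU|apply hV]; assumption.
  - intros F hF Tau hT hB. apply hT. intros U hU. apply hF; assumption.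
Qed.

Definition allfam {T : Type} (tau : (T -> Prop) -> Prop) : ((T -> Prop) -> Prop) -> Prop :=
  fun F => forall U, F U -> tau U.

Lemma allfam_gts {T : Type} (tau : (T -> Prop) -> Prop) :
  is_topology T tau -> is_gts T tau (allfam tau).
Proof.
  intros [t0 [t1 [t2 t3]]].
  unfold is_gts, allfam.
  split; [auto|]. split; [auto|]. split; [auto|].
  split.
  { intros U V hU hV. split; [|auto].
    assert (E : set_union T U V = bigU (fun W => W = U \/ W = V)).
    { apply pred_ext; intro x; unfold set_union, bigU; split.
      - intros [h|h]; [exists U|exists V]; auto.
      - intros [W [[->| ->] h]]; auto. }
    rewrite E. apply t3. intros W [->| ->]; auto. }
  split; [auto|].
  split; [intros F hF; apply t3; auto|].
  split.
  { intros F V hF hV _ W [U [hU ->]]. apply t2; auto. }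
  split.
  { intros F G hF hG W [U [hU hW]]. apply (proj1 (hG U hU)); auto. }
  split; [auto|].
  intros F V hF hsub hI.
  assert (E : V = bigU (fun W => exists U, F U /\ W = set_inter T V U)).
  { apply pred_ext; intro x; split.
    - intro hx. destruct (hsub x hx) as [U [hU hUx]].
      exists (set_inter T V U); split; [exists U; auto|split; auto].
    - intros [W [[U [hU ->]] [h _]]]; exact h. }
  rewrite E. apply t3. intros W [U [hU ->]]. apply hI; auto.
Qed.

Lemma opens_allfam {T : Type} (tau : (T -> Prop) -> Prop) :
  opens_of T (allfam tau) = tau.
Proof.
  apply pred_ext; intro U; split.
  - intros [F [hF hU]]; apply hF; auto.
  - intro hU. exists (fun V => V = U); split; [intros V ->; auto|reflexivity].
Qed.

Lemma allfam_gentop {T : Type} (tau : (T -> Prop) -> Prop) :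
  is_topology T tau -> is_gen_topology T (allfam tau).
Proof.
  intro h; unfold is_gen_topology; rewrite opens_allfam; apply allfam_gts; auto.
Qed.

Lemma gts_A3 {X : Type} (G : gts X) : forall U, Op G U -> Cov G (fun V => V = U).
Proof.
  intros U hU. destruct (gts_axioms X G) as [_ [_ [_ [_ [h3 _]]]]].
  apply h3. intros V ->; auto.
  exists (U :: nil). intro V; simpl; split; [intro; left; auto|intros [->|[]]; auto].
Qed.

Lemma prod_Op_fst {X Y : Type} (G : gts X) (H : gts Y) U :
  Op G U -> prod_Op G H (fun p => U (fst p)).
Proof.
  intro hU. exists (preim_family fst (fun V => V = U)). split.
  - intros Cv _ hgen. apply hgen. left. exists (fun V => V = U).
    split; [apply gts_A3; auto|reflexivity].
  - exists U; auto.
Qed.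

Lemma prod_Op_snd {X Y : Type} (G : gts X) (H : gts Y) V :
  Op H V -> prod_Op G H (fun p => V (snd p)).
Proof.
  intro hV. exists (preim_family snd (fun W => W = V)). split.
  - intros Cv _ hgen. apply hgen. right. exists (fun W => W = V).
    split; [apply gts_A3; auto|reflexivity].
  - exists V; auto.
Qed.

Lemma preim_fst_gt {X Y : Type} (G : gts X) (H : gts Y) U :
  generated_topology X (Op G) U ->
  generated_topology (X * Y) (prod_Op G H) (fun p => U (fst p)).
Proof.
  intro hU.
  destruct (gt_top (prod_Op G H)) as [t0 [t1 [t2 t3]]].
  apply (gt_min (Op G) (fun A => generated_topology (X * Y) (prod_Op G H) (fun p => A (fst p)))); auto.
  - split; [exact t0|]. split; [exact t1|]. split.
    + intros A B hA hB. exact (t2 _ _ hA hB).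
    + intros F hF.
      assert (E : (fun p : X * Y => bigU F (fst p)) =
                  bigU (fun W => exists A, F A /\ W = (fun p : X * Y => A (fst p)))).
      { apply pred_ext; intro p; split.
        - intros [A [hA hAp]]. exists (fun p : X * Y => A (fst p)); split; [exists A; auto|auto].
        - intros [W [[A [hA ->]] hp]]. exists A; auto. }
      rewrite E. apply t3. intros W [A [hA ->]]. apply hF; auto.
  - intros A hA. apply gt_base. apply prod_Op_fst; auto.
Qed.

Theorem theorem4p15 (X : Type) (G : gts X) :
  top_compact G <->
  (forall (Y : Type) (H : gts Y) (C : (X * Y) -> Prop),
     prod_weakly_closed G H C ->
     weakly_closed H (fun y => exists x, C (x, y))).
Proof.
  destruct (gts_axioms X G) as [g0 [g1 [g1x [g2 _]]]].
  split.
  - intros hcomp Y H C hC.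
    destruct (gts_axioms Y H) as [h0 [h1 [h1x [h2 _]]]].
    set (R := fun W : X * Y -> Prop => forall p, W p -> exists U V, Op G U /\ Op H V /\
               U (fst p) /\ V (snd p) /\ (forall q, U (fst q) -> V (snd q) -> W q)).
    assert (hR : is_topology (X * Y) R).
    { split; [intros p []|]. split.
      { intros p _. exists (fun _ => True), (fun _ => True). auto 10. }
      split.
      { intros W1 W2 hW1 hW2 p [hp1 hp2].
        destruct (hW1 p hp1) as [U1 [V1 [hU1 [hV1 [a1 [b1 c1]]]]]].
        destruct (hW2 p hp2) as [U2 [V2 [hU2 [hV2 [a2 [b2 c2]]]]]].
        exists (set_inter X U1 U2), (set_inter Y V1 V2).
        split; [exact (proj2 (g2 _ _ hU1 hU2))|]. split; [exact (proj2 (h2 _ _ hV1 hV2))|].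
        split; [split; auto|]. split; [split; auto|].
        intros q [] []; split; auto. }
      intros F hF p [W [hW hp]].
      destruct (hF W hW p hp) as [U [V [hU [hV [a [b c]]]]]].
      exists U, V. repeat split; auto. intros q hq1 hq2. exists W; auto. }
    assert (hOpR : forall W, prod_Op G H W -> R W).
    { intros W [F [hF hW]]. apply (hF (allfam R)); auto.
      - apply allfam_gentop; auto.
      - intros F0 [[U [hU ->]]|[V [hV ->]]] W0 [A [hA ->]].
        + assert (hA' : Op G A) by (apply (g0 U hU); auto).
          intros p hp. exists A, (fun _ => True). repeat split; auto.
        + assert (hA' : Op H A) by (apply (h0 V hV); auto).
          intros p hp. exists (fun _ => True), A. repeat split; auto. }
    assert (hRC : R (set_compl C)) by (apply (gt_min _ _ hR hOpR); exact hC).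
    unfold weakly_closed, weakly_open.
    set (P := fun y => exists x, C (x, y)).
    assert (E : set_compl P = bigU (fun V => Op H V /\ subset V (set_compl P))).
    { apply pred_ext; intro y; split.
      2:{ intros [V [[_ hV] hy]]; apply hV; auto. }
      intro hy.
      set (Fam := fun U => Op G U /\ exists V, Op H V /\ V y /\
                   forall q, U (fst q) -> V (snd q) -> ~ C q).
      destruct (hcomp Fam) as [l [hl hlc]].
      { intros U [hU _]; apply gt_base; auto. }
      { intro x. assert (hx : set_compl C (x, y)) by (intro hc; apply hy; exists x; auto).
        destruct (hRC _ hx) as [U [V [hU [hV [a [b c]]]]]].
        exists U. split; [|exact a]. split; auto. exists V. auto. }
      assert (hind : forall l, (forall U, In U l -> Fam U) -> exists V, Op H V /\ V y /\
                forall U, In U l -> forall q, U (fst q) -> V (snd q) -> ~ C q).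
      { induction l0 as [|U0 l0 IH]; intro hl0.
        - exists (fun _ => True). split; [auto|split; [auto|intros U []]].
        - destruct IH as [V1 [hV1 [hy1 c1]]]. { intros U hU; apply hl0; right; auto. }
          destruct (hl0 U0 (or_introl eq_refl)) as [_ [V2 [hV2 [hy2 c2]]]].
          exists (set_inter Y V1 V2). split; [exact (proj2 (h2 _ _ hV1 hV2))|]. split; [split; auto|].
          intros U [<-|hU] q hq [q1 q2]; [apply c2|apply (c1 U)]; auto. }
      destruct (hind l hl) as [V [hV [hyV cV]]].
      exists V. split; [split; auto|auto].
      intros y' hy' [x hx]. destruct (hlc x) as [U [hU hUx]].
      apply (cV U hU (x, y')); auto. }
    rewrite E. apply gt_top. intros V [hV _]. apply gt_base; auto.
  - intros hproj F hF hcov. apply NNPP. intro hnl.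
    set (tY := fun W : option X -> Prop => W None -> exists l, (forall U, In U l -> F U) /\
                 forall x, (forall U, In U l -> ~ U x) -> W (Some x)).
    assert (htY : is_topology (option X) tY).
    { split; [intros []|]. split.
      { intros _. exists nil. split; [intros U []|auto]. }
      split.
      { intros A B hA hB [hA0 hB0].
        destruct (hA hA0) as [l1 [hl1 c1]]. destruct (hB hB0) as [l2 [hl2 c2]].
        exists (l1 ++ l2). split.
        - intros U hU. apply in_app_or in hU. destruct hU; auto.
        - intros x hx. split; [apply c1|apply c2]; intros U hU; apply hx; apply in_or_app; auto. }
      intros Fm hFm [W [hW hW0]].
      destruct (hFm W hW hW0) as [l [hl c]]. exists l. split; auto.
      intros x hx. exists W; auto. }
    set (HY := Gts (option X) tY (allfam tY) (allfam_gts tY htY)).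
    set (C := fun p : X * option X => forall W, generated_topology (X * option X) (prod_Op G HY) W ->
                 W p -> exists x, W (x, Some x)).
    assert (hCc : prod_weakly_closed G HY C).
    { unfold prod_weakly_closed.
      assert (E : set_compl C = bigU (fun W => generated_topology (X * option X) (prod_Op G HY) W
                                       /\ forall x, ~ W (x, Some x))).
      { apply pred_ext; intro p; split.
        - intro hnC. apply NNPP. intro hn. apply hnC. intros W hW hWp. apply NNPP. intro hne.
          apply hn. exists W. split; [split; auto|auto].
          intros x hx. apply hne. exists x; auto.
        - intros [W [[hW hd] hWp]] hCp. destruct (hCp W hW hWp) as [x hx]. apply (hd x hx). }
      rewrite E. apply gt_top. intros W [hW _]; auto. }
    specialize (hproj (option X) HY C hCc).
    unfold weakly_closed, weakly_open in hproj.
    assert (hO : tY (set_compl (fun y => exists x, C (x, y)))).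
    { apply (gt_min (Op HY) tY htY); auto. }
    destruct (classic (exists x, C (x, None))) as [[x hx]|hnN].
    + destruct (hcov x) as [U [hU hUx]].
      set (V := fun y : option X => match y with None => True | Some x' => ~ U x' end).
      assert (hV : tY V).
      { intros _. exists (U :: nil). split.
        - intros U' [<-|[]]; auto.
        - intros x' hx'. apply (hx' U); simpl; auto. }
      destruct (hx (set_inter (X * option X) (fun p => U (fst p)) (fun p => V (snd p)))) as [x' [h1 h2]].
      * apply gt_top; [apply preim_fst_gt; apply hF; auto|apply gt_base; apply (prod_Op_snd G HY V hV)].
      * split; simpl; auto.
      * simpl in h1, h2. auto.
    + destruct (hO hnN) as [l [hl c]].
      assert (hex : exists x, forall U, In U l -> ~ U x).
      { apply NNPP. intro hn. apply hnl. exists l. split; auto.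
        intro x. apply NNPP. intro hn2. apply hn. exists x. intros U hU hUx. apply hn2.
        exists U; auto. }
      destruct hex as [x hx]. apply (c x hx). exists x. intros W _ hW. exists x; auto.
Qed.
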